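(* Let $n,T\ge1$, $\beta^1,\beta^2\in(0,1)$, and let $\mathcal{V}$ denote the set of all finite products $U_r\cdots U_1$ ($r\ge1$) of matrices $U_s\in\mathcal{S}$. Then: (i) $W$ is invariant under every $H\in\mathcal{V}$; (ii) $\|H\mathbf{z}\|\le\|\mathbf{z}\|$ for all $H\in\mathcal{V}$ and $\mathbf{z}\in W$; (iii) if $Y=U_r\cdots U_1\in\mathcal{V}$ is a product in which at least one factor equals $\begin{bmatrix}E^1&0\\0&I\end{bmatrix}$ and at least one factor equals $\begin{bmatrix}I&0\\0&E^2\end{bmatrix}$, then $\|Y\mathbf{z}\|<\|\mathbf{z}\|$ for every non-zero $\mathbf{z}\in W$.
   Context: $\mathbf{e}\in\mathbb{R}^n$ is the all-ones vector. For $j=1,2$ and $b\in\{\beta^j,1\}^n$, $A_b=\operatorname{diag}(b)+\frac1n\mathbf{e}(\mathbf{e}-b)^\top$; $\mathcal{F}^j=\{A_b:b\in\{\beta^j,1\}^n\}$; $B^j=\beta^jI+\frac{1-\beta^j}{n}\mathbf{e}\mathbf{e}^\top$. For $A\in\mathcal{F}^j$, $D(A)\in\mathbb{R}^{Tn\times Tn}$ is the $T\times T$ block matrix with: block row 1 equal to $(A,0,\dots,0)$; block row 2 (if $T\ge2$) equal to $(\tfrac12(A+I),0,\dots,0)$; for $3\le\ell\le T$, block row $\ell$ has $\tfrac1\ell A$ in block column 1, $\tfrac{\ell-1}{\ell}I$ in block column $\ell-1$, zeros elsewhere. $\mathcal{Q}^j=\{D(A):A\in\mathcal{F}^j\}$,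 $E^j=D(B^j)$. $\mathcal{S}$ is the set of all $2Tn\times2Tn$ matrices $\begin{bmatrix}D^1&0\\0&I\end{bmatrix}$ ($D^1\in\mathcal{Q}^1$) and $\begin{bmatrix}I&0\\0&D^2\end{bmatrix}$ ($D^2\in\mathcal{Q}^2$). For $\mathbf{z}^j=((\mathbf{z}^j_1)^\top,\dots,(\mathbf{z}^j_T)^\top)^\top\in\mathbb{R}^{Tn}$, $\|\mathbf{z}^j\|_T=\max_t\|\mathbf{z}^j_t\|_1$, and for $\mathbf{z}=(\mathbf{z}^1,\mathbf{z}^2)$, $\|\mathbf{z}\|=\max\{\|\mathbf{z}^1\|_T,\|\mathbf{z}^2\|_T\}$. $W=\{(\mathbf{z}^1,\mathbf{z}^2):\mathbf{e}^\top\mathbf{z}^1_t=\mathbf{e}^\top\mathbf{z}^2_t=0,\ t=1,\dots,T\}$. *)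

(* Defs.v *)
From HB Require Import structures.
From mathcomp Require Import all_boot all_order all_algebra.
Set Implicit Arguments. Unset Strict Implicit. Unset Printing Implicit Defensive.
Import Order.TTheory GRing.Theory Num.Theory.
Local Open Scope ring_scope.

Section Defs.
Variable R : realFieldType.

(* size of the stacked vector z^j = (z^j_1, ..., z^j_T), each z^j_t in R^n *)
Definition stk (T n : nat) : nat := (\sum_(t < T) (fun _ : 'I_T => n) t)%N.

Definition evec (n : nat) : 'cV[R]_n := const_mx 1.

Definition Amat (n : nat) (b : 'rV[R]_n) : 'M[R]_n :=
  diag_mx b + (n%:R)^-1 *: (evec n *m (const_mx 1 - b)).

Definition inF (n : nat) (beta : R) (A : 'M[R]_n) : Prop :=
  exists b : 'rV[R]_n, (forall i, b 0 i = beta \/ b 0 i = 1) /\ A = Amat b.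

Definition Bmat (n : nat) (beta : R) : 'M[R]_n :=
  beta *: 1%:M + ((1 - beta) / n%:R) *: (evec n *m (evec n)^T).

(* blocks of D(A), with 0-based block indices l (row) and c (column):
   block row 1: (A,0,...,0); block row 2: ((A+I)/2,0,...,0);
   block row l+1 >= 3: A/(l+1) in column 1, l/(l+1) I in column l, 0 elsewhere *)
Definition Dblk (T n : nat) (A : 'M[R]_n) (l c : 'I_T) : 'M[R]_n :=
  if (l == 0%N :> nat) then (if (c == 0%N :> nat) then A else 0)
  else if (l == 1%N :> nat) then (if (c == 0%N :> nat) then 2%:R^-1 *: (A + 1%:M) else 0)
  else if (c == 0%N :> nat) then (l.+1%:R)^-1 *: A
  else if (c == l.-1 :> nat) then (l%:R / l.+1%:R) *: 1%:M
  else 0.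

Definition Dmat (T n : nat) (A : 'M[R]_n) : 'M[R]_(stk T n) :=
  \mxblock_(l < T, c < T) Dblk A l c.

Definition inQ (T n : nat) (beta : R) (D : 'M[R]_(stk T n)) : Prop :=
  exists A, inF beta A /\ D = Dmat T A.

Definition Emat (T n : nat) (beta : R) : 'M[R]_(stk T n) := Dmat T (Bmat n beta).

Definition blk1 (T n : nat) (D : 'M[R]_(stk T n)) : 'M[R]_(stk T n + stk T n) :=
  block_mx D 0 0 1%:M.
Definition blk2 (T n : nat) (D : 'M[R]_(stk T n)) : 'M[R]_(stk T n + stk T n) :=
  block_mx 1%:M 0 0 D.

Definition inS (T n : nat) (beta1 beta2 : R) (H : 'M[R]_(stk T n + stk T n)) : Prop :=
  (exists D1, inQ beta1 D1 /\ H = blk1 D1) \/ (exists D2, inQ beta2 D2 /\ H = blk2 D2).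

(* product U_r ... U_1 of the list [:: U_r; ...; U_1] *)
Definition mxprod (m : nat) (s : seq 'M[R]_m) : 'M[R]_m :=
  foldr (fun U P => U *m P) 1%:M s.

Definition inV (T n : nat) (beta1 beta2 : R) (H : 'M[R]_(stk T n + stk T n)) : Prop :=
  exists s : seq 'M[R]_(stk T n + stk T n),
    s != [::] /\ (forall U, U \in s -> inS beta1 beta2 U) /\ H = mxprod s.

Definition zpart (T n : nat) (z : 'cV[R]_(stk T n + stk T n)) (j : bool) : 'cV[R]_(stk T n) :=
  if j then dsubmx z else usubmx z.   (* j = false : z^1, j = true : z^2 *)
Definition zblk (T n : nat) (w : 'cV[R]_(stk T n)) (t : 'I_T) : 'cV[R]_n :=
  submxcol w t.

Definition norm1 (n : nat) (v : 'cV[R]_n) : R := \sum_i `|v i 0|.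

(* ||w||_T = max_t ||w_t||_1  (all terms are >= 0, so 0 is a neutral start) *)
Definition normT (T n : nat) (w : 'cV[R]_(stk T n)) : R :=
  \big[Num.max/0]_(t < T) norm1 (zblk w t).

Definition normz (T n : nat) (z : 'cV[R]_(stk T n + stk T n)) : R :=
  Num.max (normT (zpart z false)) (normT (zpart z true)).

Definition inW (T n : nat) (z : 'cV[R]_(stk T n + stk T n)) : Prop :=
  forall (j : bool) (t : 'I_T), \sum_i (zblk (zpart z j) t) i 0 = 0.

End Defs.

(* Main.v *)
Require Import Defs.
From HB Require Import structures.
From mathcomp Require Import all_boot all_order all_algebra.
From mathcomp Require Import ring lra.
Import Order.TTheory GRing.Theory Num.Theory.
Local Open Scope ring_scope.
Set Implicit Arguments. Unset Strict Implicit. Unset Printing Implicit Defensive.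
Section S.
Variable R : realFieldType.
Implicit Types (n : nat).
Definition sumv n (v : 'cV[R]_n) : R := \sum_i v i 0.

Lemma norm1_ge0 n (v : 'cV[R]_n) : 0 <= norm1 v.
Proof. by apply: sumr_ge0 => i _; exact: normr_ge0. Qed.
Lemma norm1D n (u v : 'cV[R]_n) : norm1 (u + v) <= norm1 u + norm1 v.
Proof. rewrite /norm1 -big_split /=; apply: ler_sum => i _; rewrite mxE; exact: ler_normD. Qed.
Lemma norm1Z n a (v : 'cV[R]_n) : norm1 (a *: v) = `|a| * norm1 v.
Proof. rewrite /norm1 mulr_sumr; apply: eq_bigr => i _; by rewrite mxE normrM. Qed.
Lemma norm10 n : norm1 (0 : 'cV[R]_n) = 0.
Proof. rewrite /norm1 big1 // => i _; by rewrite mxE normr0. Qed.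
Lemma sumvD n (u v : 'cV[R]_n) : sumv (u + v) = sumv u + sumv v.
Proof. rewrite /sumv -big_split /=; apply: eq_bigr => i _; by rewrite mxE. Qed.
Lemma sumvZ n a (v : 'cV[R]_n) : sumv (a *: v) = a * sumv v.
Proof. rewrite /sumv mulr_sumr; apply: eq_bigr => i _; by rewrite mxE. Qed.
Lemma norm1_gt0 n (v : 'cV[R]_n) : v != 0 -> 0 < norm1 v.
Proof.
move=> nz.
have [i Hi] : exists i, v i 0 != 0.
  apply/existsP; apply: contraR nz => /existsPn H; apply/eqP/matrixP => i j.
  by rewrite ord1 mxE; move: (H i); rewrite negbK => /eqP.
rewrite /norm1 (bigD1 i) //=; apply: (lt_le_trans (y := `|v i 0|)).
  by rewrite normr_gt0.
by rewrite lerDl; apply: sumr_ge0 => k _; exact: normr_ge0.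
Qed.

Lemma Amat_mulE n (b : 'rV[R]_n) (v : 'cV[R]_n) i :
  (Amat b *m v) i 0 = b 0 i * v i 0 + n%:R^-1 * \sum_j (1 - b 0 j) * v j 0.
Proof.
rewrite /Amat mulmxDl mxE mul_diag_mx mxE -scalemxAl mxE; congr (_ + _ * _).
rewrite -mulmxA mxE big_ord1 /evec mxE mul1r mxE; apply: eq_bigr => j _.
by rewrite !mxE.
Qed.

Lemma Amat_prop n (b : 'rV[R]_n) (v : 'cV[R]_n) : (1 <= n)%N ->
  (forall i, 0 <= b 0 i <= 1) ->
  sumv (Amat b *m v) = sumv v /\ norm1 (Amat b *m v) <= norm1 v.
Proof.
move=> n1 hb; have nz : n%:R != 0 :> R by rewrite pnatr_eq0 -lt0n.
split.
  rewrite /sumv; under eq_bigr do rewrite Amat_mulE.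
  rewrite big_split /= sumr_const card_ord -[_ *+ n]mulr_natl mulrA mulfV // mul1r.
  rewrite -big_split /=; apply: eq_bigr => i _; ring.
rewrite /norm1; under eq_bigr do rewrite Amat_mulE.
apply: (le_trans (y := \sum_i (b 0 i * `|v i 0| + n%:R^-1 * \sum_j (1 - b 0 j) * `|v j 0|))).
  apply: ler_sum => i _; apply: (le_trans (ler_normD _ _)); apply: lerD.
    by rewrite normrM ger0_norm //; case/andP: (hb i).
  rewrite normrM ger0_norm ?invr_ge0 ?ler0n //; apply: ler_wpM2l; first by rewrite invr_ge0 ler0n.
  apply: (le_trans (ler_norm_sum _ _ _)); apply: ler_sum => j _.
  by rewrite normrM ger0_norm // subr_ge0; case/andP: (hb j).
rewrite big_split /= sumr_const card_ord -[_ *+ n]mulr_natl mulrA mulfV // mul1r.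
rewrite -big_split /= le_eqVlt; apply/orP; left; apply/eqP; apply: eq_bigr => i _; ring.
Qed.

Lemma Bmat_mul n (beta : R) (v : 'cV[R]_n) : sumv v = 0 -> Bmat n beta *m v = beta *: v.
Proof.
move=> s0; rewrite /Bmat mulmxDl -scalemxAl mul1mx -scalemxAl -mulmxA.
have -> : (evec R n)^T *m v = 0.
  apply/matrixP => i j; rewrite !ord1 !mxE -[RHS]s0; apply: eq_bigr => k _.
  by rewrite !mxE mul1r.
by rewrite mulmx0 scaler0 addr0.
Qed.
Lemma arith (g a b M k : R) : 0 <= g <= 1 -> 0 <= a <= M -> b <= M -> 1 <= k ->
 k^-1 * (g * a) + (k-1)/k * b <= M - (1-g) * M / k.
Proof.
move=> /andP[g0 g1] /andP[a0 aM] bM k1.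
have kp : 0 < k by lra.
have kx : k * k^-1 = 1 by rewrite mulfV // gt_eqF.
have xp : 0 < k^-1 by rewrite invr_gt0.
have h1 : k^-1 * (g * a) <= k^-1 * (g * M) by rewrite ler_pM2l // ler_wpM2l.
have h2 : (k - 1) * k^-1 * b <= (k-1) * k^-1 * M by rewrite ler_wpM2l // mulr_ge0 ?subr_ge0 // ltW.
have h3 : k * k^-1 * M = M by rewrite kx mul1r.
apply: (le_trans (lerD h1 h2)).
rewrite le_eqVlt; apply/orP; left; apply/eqP; field; by rewrite gt_eqF.
Qed.

Section TN.
Variables (T n : nat).
Implicit Types (w : 'cV[R]_(stk T n)).

Lemma normT_ge0 w : 0 <= normT w.
Proof. rewrite /normT; apply: (big_ind (fun x => 0 <= x)) => //; [move=> x y hx hy; by rewrite le_max hx | move=> i _; exact: norm1_ge0]. Qed.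

Lemma norm1_le_normT w t : norm1 (zblk w t) <= normT w.
Proof. by rewrite /normT (bigD1 t) //= le_max lexx. Qed.

Lemma normT_le w M : 0 <= M -> (forall t, norm1 (zblk w t) <= M) -> normT w <= M.
Proof.
move=> M0 H; rewrite /normT; apply: (big_ind (fun x => x <= M)) => // x y hx hy.
by rewrite ge_max hx hy.
Qed.

Lemma normT_lt w M : 0 < M -> (forall t, norm1 (zblk w t) < M) -> normT w < M.
Proof.
move=> M0 H; rewrite /normT; apply: (big_ind (fun x => x < M)) => // x y hx hy.
by rewrite gt_max hx hy.
Qed.

Lemma normT_gt0 w : w != 0 -> 0 < normT w.
Proof.
move=> nz.
have [t Ht] : exists t, zblk w t != 0.
  apply/existsP; apply: contraR nz => /existsPn H; apply/eqP.
  rewrite -(submxcolK w) -(@mxcol0 R T (fun _ : 'I_T => n) 1); apply: eq_mxcol => t.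
  by move: (H t); rewrite negbK => /eqP.
exact: (lt_le_trans (norm1_gt0 Ht) (norm1_le_normT w t)).
Qed.

Lemma normT0 : normT (0 : 'cV[R]_(stk T n)) = 0.
Proof.
apply/eqP; rewrite eq_le normT_ge0 andbT; apply: normT_le => // t.
by rewrite /zblk submxcol0 norm10.
Qed.

Lemma zblk_D (A : 'M[R]_n) w l :
  zblk (Dmat T A *m w) l = \sum_c Dblk A l c *m zblk w c.
Proof. by rewrite /zblk /Dmat -{1}(submxcolK w) mul_mxblock_mxrow mxcolK. Qed.

Lemma zblk_D0 (A : 'M[R]_n) w (l o : 'I_T) : val o = 0%N -> val l = 0%N ->
  zblk (Dmat T A *m w) l = A *m zblk w o.
Proof.
move=> o0 l0; rewrite zblk_D (bigD1 o) //= big1 ?addr0.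
  by rewrite /Dblk l0 o0.
move=> c co; rewrite /Dblk l0 /=.
have -> : (val c == 0%N) = false by apply/negbTE; apply: contra co => /eqP h; apply/eqP/val_inj; rewrite /= h o0.
by rewrite mul0mx.
Qed.

Lemma zblk_D1 (A : 'M[R]_n) w (l o : 'I_T) : val o = 0%N -> val l = 1%N ->
  zblk (Dmat T A *m w) l = 2%:R^-1 *: (A *m zblk w o + zblk w o).
Proof.
move=> o0 l1; rewrite zblk_D (bigD1 o) //= big1 ?addr0.
  by rewrite /Dblk l1 o0 /= -scalemxAl mulmxDl mul1mx.
move=> c co; rewrite /Dblk l1 /=.
have -> : (val c == 0%N) = false by apply/negbTE; apply: contra co => /eqP h; apply/eqP/val_inj; rewrite /= h o0.
by rewrite mul0mx.
Qed.

Lemma zblk_D2 (A : 'M[R]_n) w (l o o' : 'I_T) : val o = 0%N -> (2 <= val l)%N ->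
  val o' = (val l).-1 ->
  zblk (Dmat T A *m w) l = (l.+1%:R)^-1 *: (A *m zblk w o) + (l%:R / l.+1%:R) *: zblk w o'.
Proof.
move=> o0 l2 o'1.
have oo' : o' != o by apply/eqP => h; move: o'1; rewrite h o0; case: (val l) l2 => [|[]].
have Hl0 : (val l == 0%N) = false by case: (val l) l2.
have Hl1 : (val l == 1%N) = false by case: (val l) l2 => [|[]].
rewrite zblk_D (bigD1 o) //= (bigD1 o') //= big1 ?addr0.
  rewrite /Dblk Hl0 Hl1 o0 /= -scalemxAl; congr (_ + _).
  have -> : (val o' == 0%N) = false by rewrite o'1; case: (val l) l2 => [|[]].
  by rewrite o'1 eqxx -scalemxAl mul1mx.
move=> c /andP[co co']; rewrite /Dblk Hl0 Hl1 /=.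
have -> : (val c == 0%N) = false by apply/negbTE; apply: contra co => /eqP h; apply/eqP/val_inj; rewrite /= h o0.
have -> : (val c == (val l).-1) = false by apply/negbTE; apply: contra co' => /eqP h; apply/eqP/val_inj; rewrite /= h o'1.
by rewrite mul0mx.
Qed.


Lemma D_bound (g : R) (A : 'M[R]_n) w : 0 <= g <= 1 ->
  (forall v, sumv v = 0 -> sumv (A *m v) = 0 /\ norm1 (A *m v) <= g * norm1 v) ->
  (forall t, sumv (zblk w t) = 0) ->
  forall l : 'I_T, sumv (zblk (Dmat T A *m w) l) = 0 /\
     norm1 (zblk (Dmat T A *m w) l) <= normT w - (1 - g) * normT w / l.+1%:R.
Proof.
move=> hg hA hw l.
have T0 : (0 < T)%N by apply: leq_ltn_trans (ltn_ord l).
pose o := Ordinal T0.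
have o0 : val o = 0%N by [].
have [sA nA] := hA _ (hw o).
have a0 := norm1_ge0 (zblk w o).
have aM := norm1_le_normT w o.
have M0 := normT_ge0 w.
have g0 : 0 <= g by case/andP: hg.
have [l0|[l1|l2]] : (l : nat) = 0%N \/ (l : nat) = 1%N \/ (2 <= l)%N.
- by case: (nat_of_ord l) => [|[|k]]; [left|right;left|right;right].
- rewrite (zblk_D0 _ _ o0 l0); split => //.
  apply: (le_trans nA); apply: (le_trans _ (arith hg (a := norm1 (zblk w o)) _ aM _)).
  + by rewrite l0 invr1 mul1r subrr mul0r mul0r addr0.
  + by rewrite a0.
  + by rewrite l0.
- rewrite (zblk_D1 _ _ o0 l1); split.
    by rewrite sumvZ sumvD sA hw addr0 mulr0.
  rewrite norm1Z; apply: (le_trans (ler_wpM2l _ (norm1D _ _))); first by rewrite normr_ge0.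
  apply: (le_trans (ler_wpM2l _ (lerD nA (lexx _)))); first by rewrite normr_ge0.
  apply: (le_trans _ (arith hg (a := norm1 (zblk w o)) _ aM _)).
  + by rewrite l1 ger0_norm ?invr_ge0 ?ler0n //; rewrite le_eqVlt; apply/orP; left; apply/eqP; ring.
  + by rewrite a0.
  + by rewrite ler1n.
- have l1 : ((l : nat).-1 < T)%N by apply: leq_ltn_trans (ltn_ord l); rewrite leq_pred.
  pose o' := Ordinal l1.
  rewrite (zblk_D2 _ _ (o' := o') o0 l2) //; split.
    by rewrite sumvD !sumvZ sA hw !mulr0 addr0.
  have b0 := norm1_le_normT w o'.
  apply: (le_trans (norm1D _ _)); rewrite !norm1Z.
  apply: (le_trans (lerD (ler_wpM2l _ nA) (lexx _))); first by rewrite normr_ge0.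
  apply: (le_trans _ (arith hg (a := norm1 (zblk w o)) (b := norm1 (zblk w o')) _ b0 _)).
  + rewrite !ger0_norm ?invr_ge0 ?ler0n ?divr_ge0 ?ler0n //.
    by rewrite -natr1 addrK.
  + by rewrite a0.
  + by rewrite ler1n.
Qed.


Definition wW w := forall t, sumv (zblk w t) = 0.
Definition goodT (D : 'M[R]_(stk T n)) :=
  forall w, wW w -> wW (D *m w) /\ normT (D *m w) <= normT w.

Lemma good_D (A : 'M[R]_n) :
  (forall v, sumv v = 0 -> sumv (A *m v) = 0 /\ norm1 (A *m v) <= 1 * norm1 v) ->
  goodT (Dmat T A).
Proof.
move=> hA w hw.
have hg : ((0:R) <= 1) && ((1:R) <= 1) by rewrite ler01 lexx.
split; first by move=> l; case: (D_bound hg hA hw l).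
apply: normT_le; first exact: normT_ge0.
move=> l; case: (D_bound hg hA hw l) => _.
by rewrite subrr !mul0r subr0.
Qed.

Lemma good1 : goodT 1%:M.
Proof. by move=> w hw; rewrite mul1mx. Qed.

Lemma goodM D1 D2 : goodT D1 -> goodT D2 -> goodT (D1 *m D2).
Proof.
move=> h1 h2 w hw; rewrite -mulmxA.
have [hw2 n2] := h2 w hw; have [hw1 n1] := h1 _ hw2.
by split => //; apply: le_trans n2.
Qed.

Lemma F_good (beta : R) (A : 'M[R]_n) : (1 <= n)%N -> 0 < beta < 1 -> inF beta A -> goodT (Dmat T A).
Proof.
move=> n1 hb [b [hbv ->]]; apply: good_D => v hv.
have hb' : forall i, 0 <= b 0 i <= 1.
  move=> i; case: (hbv i) => ->; last by apply/andP; split; [exact: ler01 | exact: lexx].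
  by case/andP: hb => h1 h2; rewrite ltW // ltW.
have [s1 s2] := Amat_prop v n1 hb'.
by rewrite s1 hv mul1r.
Qed.

Lemma E_strict (beta : R) w : (1 <= n)%N -> 0 < beta < 1 -> wW w -> w != 0 ->
  normT (Emat T n beta *m w) < normT w.
Proof.
move=> n1 /andP[b0 b1] hw nz.
have hg : (0 <= beta) && (beta <= 1) by rewrite !ltW.
have hA : forall v, sumv v = 0 -> sumv (Bmat n beta *m v) = 0 /\ norm1 (Bmat n beta *m v) <= beta * norm1 v.
  by move=> v hv; rewrite Bmat_mul // sumvZ hv mulr0 norm1Z (ger0_norm (ltW b0)).
have M0 := normT_gt0 nz.
apply: normT_lt => // l; case: (D_bound hg hA hw l) => _ h.
apply: (le_lt_trans h); rewrite gtrBl; apply: divr_gt0; last by rewrite ltr0Sn.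
by apply: mulr_gt0 => //; rewrite subr_gt0.
Qed.

Implicit Types (z : 'cV[R]_(stk T n + stk T n)).

Lemma blk1_part (D : 'M[R]_(stk T n)) z :
  zpart (blk1 D *m z) false = D *m zpart z false /\ zpart (blk1 D *m z) true = zpart z true.
Proof.
rewrite /zpart /blk1 -(vsubmxK z) mul_block_col !col_mxKu !col_mxKd.
by rewrite !mul0mx addr0 add0r mul1mx.
Qed.

Lemma blk2_part (D : 'M[R]_(stk T n)) z :
  zpart (blk2 D *m z) false = zpart z false /\ zpart (blk2 D *m z) true = D *m zpart z true.
Proof.
rewrite /zpart /blk2 -(vsubmxK z) mul_block_col !col_mxKu !col_mxKd.
by rewrite !mul0mx addr0 add0r mul1mx.
Qed.

Variables (beta1 beta2 : R).
Hypotheses (n1 : (1 <= n)%N) (hb1 : 0 < beta1 < 1) (hb2 : 0 < beta2 < 1).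

Lemma S_part U : inS beta1 beta2 U -> forall j, exists D, goodT D /\
  forall z, zpart (U *m z) j = D *m zpart z j.
Proof.
case=> [[D1 [[A [hA ->]] ->]]|[D2 [[A [hA ->]] ->]]] [].
- exists 1%:M; split; first exact: good1.
  by move=> z; case: (blk1_part (Dmat T A) z) => _ ->; rewrite mul1mx.
- exists (Dmat T A); split; first exact: (F_good n1 hb1 hA).
  by move=> z; case: (blk1_part (Dmat T A) z) => ->.
- exists (Dmat T A); split; first exact: (F_good n1 hb2 hA).
  by move=> z; case: (blk2_part (Dmat T A) z) => _ ->.
- exists 1%:M; split; first exact: good1.
  by move=> z; case: (blk2_part (Dmat T A) z) => ->; rewrite mul1mx.
Qed.

Lemma prod_part s : (forall U, U \in s -> inS beta1 beta2 U) -> forall j, exists D, goodT D /\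
  forall z, zpart (mxprod s *m z) j = D *m zpart z j.
Proof.
elim: s => [_ j|U s IH hs j].
  by exists 1%:M; split; [exact: good1 | move=> z; rewrite /= !mul1mx].
have [D1 [g1 e1]] := S_part (hs U (mem_head _ _)) j.
have [D2 [g2 e2]] : exists D, goodT D /\ forall z, zpart (mxprod s *m z) j = D *m zpart z j.
  by apply: IH => V hV; apply: hs; rewrite in_cons hV orbT.
exists (D1 *m D2); split; first exact: goodM.
by move=> z; rewrite /= -mulmxA e1 e2 mulmxA.
Qed.

Lemma normz_gt0 z : z != 0 -> 0 < normz z.
Proof.
move=> nz; rewrite /normz lt_max.
have [h|h] := eqVneq (zpart z false) 0; last by apply/orP; left; apply: normT_gt0.
have [h'|h'] := eqVneq (zpart z true) 0; last by apply/orP; right; apply: normT_gt0.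
by move: nz; rewrite -(vsubmxK z); move: h h'; rewrite /zpart => -> ->; rewrite col_mx0 eqxx.
Qed.

Lemma strict_part (j : bool) s : (forall U, U \in s -> inS beta1 beta2 U) ->
  (if j then blk2 (Emat T n beta2) else blk1 (Emat T n beta1)) \in s ->
  forall z, inW z -> z != 0 -> normT (zpart (mxprod s *m z) j) < normz z.
Proof.
elim: s => [//|U s IH hs].
have hs' : forall V, V \in s -> inS beta1 beta2 V by move=> V hV; apply: hs; rewrite in_cons hV orbT.
rewrite in_cons => /orP[/eqP eU|ins] z hz nz.
- have [D2 [g2 e2]] := prod_part hs' j.
  have [w1 nw] := g2 _ (hz j).
  have wz : normT (D2 *m zpart z j) <= normz z.
    apply: (le_trans nw); rewrite /normz le_max; by case: (j); rewrite lexx ?orbT.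
  have -> : zpart (mxprod (U :: s) *m z) j = (Emat T n (if j then beta2 else beta1)) *m (D2 *m zpart z j).
    rewrite /= -mulmxA -e2 -eU; case: (j).
      by case: (blk2_part (Emat T n beta2) (mxprod s *m z)).
    by case: (blk1_part (Emat T n beta1) (mxprod s *m z)).
  have [h|h] := eqVneq (D2 *m zpart z j) 0.
    by rewrite h mulmx0 normT0 normz_gt0.
  apply: (lt_le_trans _ wz); apply: E_strict => //; by case: (j).
- have [D1 [g1 e1]] := S_part (hs U (mem_head _ _)) j.
  have [D2 [g2 e2]] := prod_part hs' j.
  have [w1 nw] := g2 _ (hz j).
  rewrite /= -mulmxA e1 e2.
  have [_ n2] := g1 _ w1.
  apply: (le_lt_trans n2); rewrite -e2; exact: IH.
Qed.

End TN.
End S.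

Unset Implicit Arguments.

Theorem lemma5 (R : realFieldType) (n T : nat) (beta1 beta2 : R) :
  (1 <= n)%N -> (1 <= T)%N ->
  0 < beta1 < 1 -> 0 < beta2 < 1 ->
  (forall H : 'M[R]_(stk T n + stk T n), inV beta1 beta2 H ->
     forall z, inW z -> inW (H *m z))
  /\
  (forall H : 'M[R]_(stk T n + stk T n), inV beta1 beta2 H ->
     forall z, inW z -> normz (H *m z) <= normz z)
  /\
  (forall s : seq 'M[R]_(stk T n + stk T n),
     (forall U, U \in s -> inS beta1 beta2 U) ->
     blk1 (@Emat R T n beta1) \in s -> blk2 (@Emat R T n beta2) \in s ->
     forall z, inW z -> z != 0 -> normz (mxprod s *m z) < normz z).
Proof.
move=> n1 T1 hb1 hb2; split; [|split].
- move=> H [s [_ [hs ->]]] z hz j.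
  have [D [g e]] := prod_part n1 hb1 hb2 hs j.
  by rewrite e; case: (g _ (hz j)).
- move=> H [s [_ [hs ->]]] z hz.
  have [D [g e]] := prod_part n1 hb1 hb2 hs false.
  have [D' [g' e']] := prod_part n1 hb1 hb2 hs true.
  rewrite /normz e e'; case: (g _ (hz false)) => _ h; case: (g' _ (hz true)) => _ h'.
  rewrite ge_max !le_max h h' orbT /=; done.
- move=> s hs h1 h2 z hz nz.
  rewrite /normz gt_max.
  by rewrite (strict_part n1 hb1 hb2 (j := false)) // (strict_part n1 hb1 hb2 (j := true)).
Qed.
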